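(* Let $p\in(0,1)$ and $u\in(0,1)$ with $u\ne p$. Let $S_0(x)=u+(1-u)x$, $S_1(x)=ux$, and let $\mu_u$ be the unique probability measure on $[0,1]$ satisfying $\mu_u=(1-p)\mu_u\circ S_0^{-1}+p\,\mu_u\circ S_1^{-1}$ (equivalently, the law of $\Theta_\infty(u)=\sum_{k\ge0}u^{T_k}((1-u)/u)^k$, where $T_k=G_0+\dots+G_k$ with $G_i$ IID, $P(G_0=n)=p^{n-1}(1-p)$, $n\ge1$). Then $\mu_u$ is singular with respect to Lebesgue measure. *)

(* Defs.v *)
From HB Require Import structures.
From mathcomp Require Import all_boot all_order all_algebra.
From mathcomp Require Import all_classical all_reals all_analysis.
Set Implicit Arguments. Unset Strict Implicit. Unset Printing Implicit Defensive.
Import Order.TTheory GRing.Theory Num.Theory.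
Local Open Scope classical_set_scope.
Local Open Scope ring_scope.

Definition S0 {R : realType} (u : R) : R -> R := fun x => u + (1 - u) * x.
Definition S1 {R : realType} (u : R) : R -> R := fun x => u * x.

Definition self_similar_measure {R : realType} (p u : R)
  (mu : probability R R) : Prop :=
  mu [set x : R | 0 <= x <= 1] = 1%E /\
  forall A : set R, measurable A ->
    mu A = ((1 - p)%:E * mu (S0 u @^-1` A) + p%:E * mu (S1 u @^-1` A))%E.

Definition singular_wrt_lebesgue {R : realType} (mu : probability R R) : Prop :=
  exists N : set R, [/\ measurable N, (@lebesgue_measure R) N = 0%E
                       & mu (~` N) = 0%E].

(* Main.v *)
Require Import Defs.
From HB Require Import structures.
From mathcomp Require Import all_boot all_order all_algebra.
From mathcomp Require Import all_classical all_reals all_analysis.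
From mathcomp Require Import ring lra.
Import Order.TTheory GRing.Theory Num.Theory.
Import numFieldNormedType.Exports.
Local Open Scope classical_set_scope.
Local Open Scope ring_scope.

Section Aff.
Variable R : realType.

Definition aff (a b x : R) : R := a * x + b.

Lemma aff_cont a b : continuous (aff a b : R -> R).
Proof. move=> x; rewrite /aff. apply: cvgD; last exact: cvg_cst. apply: cvgMr. exact: cvg_id. Qed.

Lemma aff_mf a b : measurable_fun setT (aff a b).
Proof. exact: measurable_realfun.continuous_measurable_fun (aff_cont a b). Qed.

Lemma aff_pre a b (A : set R) : measurable A -> measurable (aff a b @^-1` A).
Proof. by move=> mA; have := aff_mf a b measurableT _ mA; rewrite setTI. Qed.

Lemma aff_mf' a b : measurable_fun setT (aff a b : measurableTypeR R -> measurableTypeR R).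
Proof. exact: aff_mf. Qed.

Lemma leb_aff a b (a0 : 0 < a) (A : set R) : measurable A ->
  lebesgue_measure A = (a%:E * lebesgue_measure (aff a b @^-1` A))%E.
Proof.
move=> mA.
pose pf := measure_function_pushforward__canonical__measure_function_Measure
  (@lebesgue_measure R) (aff_mf' a b).
have := @lebesgue_measure_unique R (mscale (NngNum (ltW a0)) pf) _ A mA.
rewrite /mscale /= => -> //.
move=> _ [[x y]] _ <-.
rewrite /mscale /= /pushforward.
have -> : aff a b @^-1` `]x, y] = `](x - b) / a, (y - b) / a]%classic.
  apply/seteqP; split => z; rewrite /= !in_itv /= /aff.
    move=> /andP[h1 h2]; apply/andP; split.
      by rewrite ltr_pdivrMr // ltrBlDr mulrC.
    by rewrite ler_pdivlMr // lerBrDr mulrC.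
  move=> /andP[h1 h2]; apply/andP; split.
    by move: h1; rewrite ltr_pdivrMr // ltrBlDr mulrC.
  by move: h2; rewrite ler_pdivlMr // lerBrDr mulrC.
rewrite !lebesgue_measure_itv /= !lte_fin ltr_pM2r ?invr_gt0 // ltrD2r.
case: ifP => _; last by rewrite mule0.
rewrite -EFinD -EFinM; congr EFin.
by field; rewrite gt_eqF.
Qed.
End Aff.
Arguments aff {R}.

Section Kn.
Variable R : realType.
Variable u : R.
Hypotheses (hu0 : 0 < u) (hu1 : u < 1).

Fixpoint kn (n : nat) (x : R) : nat :=
  match n with
  | 0 => 0%N
  | n'.+1 => if x < u then (kn n' (aff u^-1 0 x)).+1
             else kn n' (aff (1 - u)^-1 (- (u / (1 - u))) x)
  end.

Lemma itv_lt (a : R) : [set x : R | x < a] = `]-oo, a[%classic.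
Proof. by apply/seteqP; split => x; rewrite /= in_itv. Qed.

Lemma kn_meas n (P : set nat) : measurable (kn n @^-1` P).
Proof.
elim: n P => [|n IH] P.
  case: (pselect (P 0%N)) => HP.
    by rewrite (_ : _ @^-1` _ = setT) //; apply/seteqP; split => x //=.
  by rewrite (_ : _ @^-1` _ = set0) //; apply/seteqP; split => x //=.
rewrite (_ : _ @^-1` _ = ([set x | x < u] `&` (aff u^-1 0 @^-1` (kn n @^-1` (fun k => P k.+1))))
   `|` (~` [set x | x < u] `&` (aff (1 - u)^-1 (- (u / (1 - u))) @^-1` (kn n @^-1` P)))).
  apply: measurableU; apply: measurableI; rewrite ?itv_lt //.
  - exact: aff_pre.
  - exact: measurableC.
  - exact: aff_pre.
apply/seteqP; split => x /=; case: ifP => hx.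
- by move=> ?; left.
- by move=> ?; right.
- by case=> -[].
- by case=> -[] // _.
Qed.

Lemma kn_S0 n x : 0 <= x -> kn n.+1 (S0 u x) = kn n x.
Proof.
move=> x0 /=; rewrite /S0 ifF; last first.
  apply/negbTE; rewrite -leNgt lerDl mulr_ge0 // subr_ge0 ltW //.
congr kn; rewrite /aff; field; rewrite subr_eq0 gt_eqF //.
Qed.

Lemma kn_S1 n x : x < 1 -> kn n.+1 (S1 u x) = (kn n x).+1.
Proof.
move=> x1 /=; rewrite /S1 ifT; last by rewrite gtr_pMr.
congr (kn _ _).+1; rewrite /aff; field; rewrite gt_eqF //.
Qed.

Lemma S0_pre (A : set R) : measurable A -> measurable (S0 u @^-1` A).
Proof.
by rewrite (_ : S0 u = aff (1 - u) u); [exact: aff_pre|apply/funext => x; rewrite /S0 /aff addrC].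
Qed.

Lemma S1_pre (A : set R) : measurable A -> measurable (S1 u @^-1` A).
Proof.
by rewrite (_ : S1 u = aff u 0); [exact: aff_pre|apply/funext => x; rewrite /S1 /aff addr0].
Qed.

Definition w (q : R) (n k : nat) : R := 'C(n, k)%:R * q ^+ k * (1 - q) ^+ (n - k).

Lemma w_rec q n i : w q n.+1 i.+1 = (1 - q) * w q n i.+1 + q * w q n i.
Proof.
rewrite /w binS natrD subSS.
case: (ltnP i n) => hi.
  have -> : (n - i = (n - i.+1).+1)%N by rewrite subnSK.
  rewrite !exprS; ring.
rewrite (bin_small (_ : n < i.+1)%N) ?ltnS //.
have -> : (n - i = 0)%N by apply/eqP; rewrite subn_eq0.
have -> : (n - i.+1 = 0)%N by apply/eqP; rewrite subn_eq0 (leq_trans hi).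
rewrite !exprS; ring.
Qed.

Lemma w0 q n : w q n.+1 0 = (1 - q) * w q n 0.
Proof. by rewrite /w !bin0 !subn0 exprS; ring. Qed.

Lemma w_big q n : w q n n.+1 = 0.
Proof. by rewrite /w bin_small ?mul0r. Qed.

Lemma sum_rec q n (P : pred nat) :
  \sum_(k < n.+2 | P k) w q n.+1 k =
  (1 - q) * \sum_(k < n.+1 | P k) w q n k + q * \sum_(k < n.+1 | P k.+1) w q n k.
Proof.
have -> : \sum_(k < n.+1 | P k) w q n k = \sum_(k < n.+2 | P k) w q n k.
  by rewrite [RHS]big_mkcond big_ord_recr /= w_big if_same addr0 -big_mkcond.
rewrite [LHS]big_mkcond [X in (1 - q) * X]big_mkcond [X in q * X]big_mkcond /=.
rewrite [LHS]big_ord_recl [X in (1 - q) * X]big_ord_recl /= w0 mulrDr -addrA; congr (_ + _).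
  by case: (P 0%N); rewrite ?mulr0.
rewrite !mulr_sumr -big_split /=; apply: eq_bigr => i _.

rewrite /bump /=.
by case: (P i.+1); rewrite ?mulr0 ?addr0 // w_rec.
Qed.

Lemma kn_law (q : R) (m : set R -> \bar R) :
  m setT = 1%E -> m set0 = 0%E ->
  (forall A Z, measurable A -> measurable Z -> m Z = 0%E -> m A = m (A `\` Z)) ->
  m [set x | x < 0] = 0%E -> m [set x | 1 <= x] = 0%E ->
  (forall A : set R, measurable A ->
    m A = ((1 - q)%:E * m (S0 u @^-1` A) + q%:E * m (S1 u @^-1` A))%E) ->
  forall n (P : pred nat),
    m (kn n @^-1` [set k | P k]) = (\sum_(k < n.+1 | P k) w q n k)%:E.
Proof.
move=> mT m0 Hnull mneg mbig Hss n; elim: n => [|n IH] P.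
  rewrite big_mkcond big_ord1 /=.
  case hP: (P 0%N).
    rewrite (_ : _ @^-1` _ = setT) ?mT; last by apply/seteqP; split => x //=.
    by rewrite /w bin0 subnn !expr0 !mulr1.
  rewrite (_ : _ @^-1` _ = set0) ?m0 //; by apply/seteqP; split => x //=; rewrite hP.
have mneg' : measurable [set x : R | x < 0] by rewrite itv_lt.
have mbig' : measurable [set x : R | 1 <= x].
  rewrite (_ : [set x : R | 1 <= x] = ~` [set x | x < 1]); first by apply: measurableC; rewrite itv_lt.
  apply/seteqP; split => x /=; rewrite ltNge; case: (1 <= x) => //.
rewrite Hss; last exact: kn_meas.
rewrite (Hnull (S0 u @^-1` _) _ _ mneg' mneg); last by apply: S0_pre; exact: kn_meas.
rewrite (Hnull (S1 u @^-1` _) _ _ mbig' mbig); last by apply: S1_pre; exact: kn_meas.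
have -> : S0 u @^-1` (kn n.+1 @^-1` [set k | P k]) `\` [set x | x < 0] =
          kn n @^-1` [set k | P k] `\` [set x | x < 0].
  apply/seteqP; split => x [h1 h2]; (split => //); move: h1;
   have /negP := h2; rewrite -leNgt => h3;
   [change (P (kn n.+1 (S0 u x)) -> P (kn n x)) | change (P (kn n x) -> P (kn n.+1 (S0 u x)))];
   by rewrite (@kn_S0 n x h3).
have -> : S1 u @^-1` (kn n.+1 @^-1` [set k | P k]) `\` [set x | 1 <= x] =
          kn n @^-1` [set k | P k.+1] `\` [set x | 1 <= x].
  apply/seteqP; split => x [h1 h2]; (split => //); move: h1;
   have /negP := h2; rewrite -ltNge => h3;
   [change (P (kn n.+1 (S1 u x)) -> P (kn n x).+1) | change (P (kn n x).+1 -> P (kn n.+1 (S1 u x)))];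
   by rewrite (@kn_S1 n x h3).
rewrite -!Hnull //; try exact: kn_meas.
rewrite IH (IH (fun k => P k.+1)) -!EFinM -EFinD sum_rec //.
Qed.
End Kn.
Arguments w {R}.


Section Bound.
Variable R : realType.
Variables p u : R.
Hypotheses (hp0 : 0 < p) (hp1 : p < 1) (hu0 : 0 < u) (hu1 : u < 1) (hup : u != p).

Let s := Num.sqrt (p * u).
Let t := Num.sqrt ((1 - p) * (1 - u)).
Definition rho := s + t.

Lemma s2 : s ^+ 2 = p * u.
Proof. by rewrite sqr_sqrtr // mulr_ge0 // ltW. Qed.
Lemma t2 : t ^+ 2 = (1 - p) * (1 - u).
Proof. by rewrite sqr_sqrtr // mulr_ge0 // subr_ge0 ltW. Qed.

Lemma rho_ge0 : 0 <= rho.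
Proof. by rewrite /rho addr_ge0 // sqrtr_ge0. Qed.

Lemma rho_lt1 : rho < 1.
Proof.
have hs := s2; have ht := t2.
have s0 : 0 <= s by exact: sqrtr_ge0.
have t0 : 0 <= t by exact: sqrtr_ge0.
have hD : 0 < p + u - 2 * p * u.
  have h1 : 0 < p * (1 - u) by rewrite mulr_gt0 // subr_gt0.
  have h2 : 0 < u * (1 - p) by rewrite mulr_gt0 // subr_gt0.
  lra.
have hpu : 0 < (p - u) ^+ 2.
  by rewrite lt_def sqr_ge0 andbT sqrf_eq0 subr_eq0 eq_sym.
have hst : (s * t) ^+ 2 = p * u * ((1 - p) * (1 - u)) by rewrite exprMn hs ht.
have h2 : 2 * s * t < p + u - 2 * p * u.
  have : (2 * s * t) ^+ 2 < (p + u - 2 * p * u) ^+ 2.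
    rewrite (_ : (2 * s * t) ^+ 2 = 4 * (s * t) ^+ 2); last by ring.
    rewrite hst; move: hpu; rewrite !expr2 => hpu; nra.
  rewrite !expr2 => h; nra.
have : rho ^+ 2 < 1.
  rewrite /rho (_ : (s + t) ^+ 2 = s ^+ 2 + t ^+ 2 + 2 * s * t); last by ring.
  rewrite hs ht; nra.
rewrite expr2 => h; have := rho_ge0; nra.
Qed.

Definition v (n k : nat) : R := 'C(n, k)%:R * s ^+ k * t ^+ (n - k).

Lemma v_ge0 n k : 0 <= v n k.
Proof. by rewrite /v !mulr_ge0 // exprn_ge0 // sqrtr_ge0. Qed.

Lemma w_ge0 (q : R) n k : 0 <= q <= 1 -> 0 <= w q n k.
Proof. by move=> /andP[q0 q1]; rewrite /w !mulr_ge0 // exprn_ge0 // subr_ge0. Qed.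

Lemma wwv n k : w p n k * w u n k = v n k ^+ 2.
Proof.
have e1 : (s ^+ k) ^+ 2 = p ^+ k * u ^+ k.
  by rewrite -exprM mulnC exprM s2 exprMn.
have e2 : (t ^+ (n - k)) ^+ 2 = (1 - p) ^+ (n - k) * (1 - u) ^+ (n - k).
  by rewrite -exprM mulnC exprM t2 exprMn.
rewrite /v /w !exprMn e1 e2; ring.
Qed.

Lemma min_le (a b c : R) : 0 <= a -> 0 <= b -> 0 <= c -> a * b = c ^+ 2 -> a <= b -> a <= c.
Proof. rewrite expr2 => *; nra. Qed.

Lemma sum_v n : \sum_(k < n.+1) v n k = rho ^+ n.
Proof.
rewrite /rho addrC exprDn; apply: eq_bigr => i _.
by rewrite /v -mulr_natl; ring.
Qed.

Lemma bound_p n : \sum_(k < n.+1 | ~~ (w u n k < w p n k)) w p n k <= rho ^+ n.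
Proof.
rewrite -sum_v big_mkcond /=; apply: ler_sum => i _.
case: ifP => h; last exact: v_ge0.
apply: (@min_le _ _ _ _ _ (v_ge0 _ _) (wwv _ _)).
- by apply: w_ge0; rewrite !ltW.
- by apply: w_ge0; rewrite !ltW.
by rewrite leNgt.
Qed.

Lemma bound_u n : \sum_(k < n.+1 | w u n k < w p n k) w u n k <= rho ^+ n.
Proof.
rewrite -sum_v big_mkcond /=; apply: ler_sum => i _.
case: ifP => h; last exact: v_ge0.
apply: (@min_le _ _ _ _ _ (v_ge0 _ _) _ (ltW h)).
- by apply: w_ge0; rewrite !ltW.
- by apply: w_ge0; rewrite !ltW.
by rewrite mulrC wwv.
Qed.
End Bound.

Section Final.
Variable R : realType.

Lemma null_diff d (T : measurableType d) (m : {measure set T -> \bar R}) (A Z : set T) :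
  measurable A -> measurable Z -> m Z = 0%E -> m A = m (A `\` Z).
Proof.
move=> mA mZ m0; rewrite (measureDI m mA mZ).
rewrite [X in (_ + X)%E](@subset_measure0 _ _ _ m (A `&` Z) Z) ?adde0 //.
exact: measurableI.
Qed.

Lemma geo_le (r : R) m : 0 <= r -> r < 1 ->
  (\sum_(0 <= i <oo) ((r ^+ (i + m))%:E) <= (r ^+ m * (1 - r)^-1)%:E)%E.
Proof.
move=> r0 r1.
apply: lime_le; first by apply: is_cvg_nneseries => n _ _; rewrite lee_fin exprn_ge0.
apply: nearW => N; rewrite sumEFin lee_fin.
have e : forall N, (\sum_(0 <= i < N) r ^+ (i + m)) * (1 - r) = r ^+ m - r ^+ (N + m).
  elim=> [|N' IH]; first by rewrite big_geq // mul0r add0n subrr.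
  rewrite big_nat_recr //= mulrDl IH addSn exprS; ring.
rewrite ler_pdivlMr ?subr_gt0 // e lerBlDr lerDl exprn_ge0 //.
Qed.

Lemma small (r c : R) (x : \bar R) : 0 <= r -> r < 1 -> 0 <= c -> (0 <= x)%E ->
  (forall m, (x <= (r ^+ m * c)%:E)%E) -> x = 0%E.
Proof.
move=> r0 r1 c0 x0 hx.
have xfin : x \is a fin_num.
  by rewrite ge0_fin_numE // (le_lt_trans (hx 0%N)) ?ltry.
rewrite -(fineK xfin) in x0 hx *; move: (fine x) x0 hx => y; rewrite lee_fin => y0 hy.
congr EFin; apply/eqP; rewrite eq_le y0 andbT; apply/negP => /negP; rewrite -ltNge => ypos.
have e0 : 0 < y / (c + 1) by rewrite divr_gt0 // ltr_wpDl.
have hr : `|r| < 1 by rewrite ger0_norm.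
have [N _ HN] := cvgr_dist_lt _ _ (cvg_expr hr) _ e0.
have := HN N (leqnn N); rewrite /= sub0r normrN ger0_norm ?exprn_ge0 // => hN.
have := hy N; rewrite lee_fin => hN2.
have c1 : 0 < c + 1 by rewrite ltr_wpDl.
move: hN; rewrite ltr_pdivlMr // => hN.
have : r ^+ N * c <= r ^+ N * (c + 1) by rewrite ler_wpM2l ?exprn_ge0 // lerDl.
lra.
Qed.

End Final.

Theorem proposition5 (R : realType) (p u : R)
  (hp0 : 0 < p) (hp1 : p < 1) (hu0 : 0 < u) (hu1 : u < 1) (hup : u != p)
  (mu : probability R R) :
  self_similar_measure p u mu -> singular_wrt_lebesgue mu.
Proof.
move=> [mu01 Hss].
have m01c : measurable [set x : R | 0 <= x <= 1].
  rewrite (_ : [set x : R | 0 <= x <= 1] = `[0, 1]%classic); first exact: measurable_itv.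
  by apply/seteqP; split => x; rewrite /= in_itv.
have mI : measurable (`[0, 1[%classic : set R) by [].
have mlt : forall a : R, measurable [set x : R | x < a].
  by move=> a; rewrite itv_lt.
have mge : forall a : R, measurable [set x : R | a <= x].
  move=> a; rewrite (_ : [set x : R | a <= x] = ~` [set x | x < a]); first by apply: measurableC; apply: mlt.
  by apply/seteqP; split => x /=; rewrite ltNge; case: (a <= x).
have mgt : forall a : R, measurable [set x : R | a < x].
  move=> a; rewrite (_ : [set x : R | a < x] = ~` [set x | x <= a]).
    apply/measurableC; rewrite (_ : [set x : R | x <= a] = `]-oo, a]%classic); first exact: measurable_itv.
    by apply/seteqP; split => x; rewrite /= in_itv.
  by apply/seteqP; split => x /=; rewrite ltNge; case: (x <= a).
have muC : mu (~` [set x : R | 0 <= x <= 1]) = 0%E.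
  by rewrite probability_setC // mu01 subee.
have mneg : mu [set x : R | x < 0] = 0%E.
  apply: (subset_measure0 (mlt 0) _ _ muC); first exact: measurableC.
  by move=> x /= hx /andP[hx' _]; move: hx; rewrite ltNge hx'.
have mgt1 : mu [set x : R | 1 < x] = 0%E.
  apply: (subset_measure0 (mgt 1) _ _ muC); first exact: measurableC.
  by move=> x /= hx /andP[_ hx']; move: hx; rewrite ltNge hx'.
have mbig : mu [set x : R | 1 <= x] = 0%E.
  have e := Hss _ (mge 1).
  have eS0 : S0 u @^-1` [set x : R | 1 <= x] = [set x | 1 <= x].
    apply/seteqP; split => x /=; rewrite /S0.
      move=> h; have : 0 <= (1 - u) * (x - 1) by lra.
      rewrite pmulr_rge0 ?subr_gt0 // subr_ge0 //.
    move=> h; have : 0 <= (1 - u) * (x - 1) by rewrite mulr_ge0 // subr_ge0 // ltW.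
    lra.
  have eS1 : mu (S1 u @^-1` [set x : R | 1 <= x]) = 0%E.
    apply: (subset_measure0 _ (mgt 1) _ mgt1).
      by rewrite (_ : S1 u = aff u 0); [exact: aff_pre|apply/funext => x; rewrite /S1 /aff addr0].
    move=> x /=; rewrite /S1 => h.
    have x0 : 0 < x.
      by rewrite -(pmulr_rgt0 _ hu0); apply: lt_le_trans h.
    have : u * x < x by rewrite gtr_pMl.
    lra.
  move: e; rewrite eS0 eS1 mule0 adde0.
  have fz : mu [set x : R | 1 <= x] \is a fin_num.
    by rewrite ge0_fin_numE // (le_lt_trans (probability_le1 _ (mge 1))) ?ltry.
  move=> e.
  have h : fine (mu [set x : R | 1 <= x]) = (1 - p) * fine (mu [set x : R | 1 <= x]).
    by apply: EFin_inj; rewrite EFinM fineK.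
  move: h; set z := fine _; rewrite mulrBl mul1r => h.
  have : p * z = 0 by lra.
  move/eqP; rewrite mulf_eq0 (gt_eqF hp0) /= => /eqP z0.
  by rewrite -(fineK fz) -/z z0.
have law_mu := @kn_law R u hu0 hu1 p mu (probability_setT mu) (measure0 mu)
  (fun A Z mA mZ h => @null_diff R _ _ mu A Z mA mZ h) mneg mbig Hss.
pose nu := mrestr (@lebesgue_measure R) mI.
have nuE : forall A, nu A = lebesgue_measure (A `&` `[0, 1[%classic) by [].
have nuT : nu setT = 1%E.
  by rewrite nuE setTI lebesgue_measure_itv /= lte01 sube0.
have nu0 : nu set0 = 0%E by rewrite nuE set0I measure0.
have nuneg : nu [set x : R | x < 0] = 0%E.
  rewrite nuE (_ : _ `&` _ = set0) ?measure0 //.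
  by apply/seteqP; split => x //= [h1]; rewrite in_itv /= leNgt h1.
have nubig : nu [set x : R | 1 <= x] = 0%E.
  rewrite nuE (_ : _ `&` _ = set0) ?measure0 //.
  by apply/seteqP; split => x //= [h1]; rewrite in_itv /= ltNge h1 andbF.
have nuss : forall A : set R, measurable A ->
    nu A = ((1 - u)%:E * nu (S0 u @^-1` A) + u%:E * nu (S1 u @^-1` A))%E.
  move=> A mA; rewrite !nuE.
  have mA' : measurable (A : set (measurableTypeR R)) by [].
  have m0u : measurable (`[0, u[%classic : set (measurableTypeR R)) by exact: measurable_itv.
  have mu1 : measurable (`[u, 1[%classic : set (measurableTypeR R)) by exact: measurable_itv.
  rewrite (_ : A `&` `[0, 1[%classic = (A `&` `[0, u[%classic) `|` (A `&` `[u, 1[%classic)); last first.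
    rewrite -setIUr; congr (_ `&` _); apply/seteqP; split => x /=; rewrite !in_itv /=.
      move=> /andP[h1 h2]; case: (ltP x u) => hx; [left|right]; apply/andP; split => //.
    by case => /andP[h1 h2]; apply/andP; split => //; lra.
  have eU : lebesgue_measure ((A `&` `[0%R, u[%classic) `|` (A `&` `[u, 1%R[%classic)) =
      (lebesgue_measure (A `&` `[0%R, u[%classic) + lebesgue_measure (A `&` `[u, 1%R[%classic))%E.
    apply: measureU.
    - exact: measurableI.
    - exact: measurableI.
    apply/seteqP; split => x //= [[_ h1] [_ h2]]; move: h1 h2; rewrite !in_itv /= => /andP[_ h1] /andP[h2 _].
    lra.
  rewrite eU.
  rewrite (@leb_aff R u 0 hu0 _ (measurableI _ _ mA' m0u)).
  rewrite (@leb_aff _ (1 - u) u _ _ (measurableI _ _ mA' mu1)); last by rewrite subr_gt0.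
  rewrite addeC; congr (_ + _)%E; congr (_ * _)%E; congr lebesgue_measure.
  - apply/seteqP; split => x /=; rewrite /aff /S0 !in_itv /= addrC.
      move=> [hA /andP[h1 h2]]; split => //; apply/andP; split; nra.
    move=> [hA /andP[h1 h2]]; split => //; apply/andP; split; nra.
  - apply/seteqP; split => x /=; rewrite /aff /S1 !in_itv /= addr0.
      move=> [hA /andP[h1 h2]]; split => //; apply/andP; split; nra.
    move=> [hA /andP[h1 h2]]; split => //; apply/andP; split; nra.
have law_nu := @kn_law R u hu0 hu1 u nu nuT nu0
  (fun A Z mA mZ h => @null_diff R _ _ (mrestr (@lebesgue_measure R) mI) A Z mA mZ h) nuneg nubig nuss.
pose Bn n := kn R u n @^-1` [set k | w u n k < w p n k] `&` `[0, 1[%classic.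
have mB : forall n, measurable (Bn n) by move=> n; apply: measurableI => //; exact: kn_meas.
pose r := rho R p u.
have r0 : 0 <= r by exact: rho_ge0.
have r1 : r < 1 by exact: rho_lt1.
have muB : forall n, (mu (~` Bn n) <= (r ^+ n)%:E)%E.
  move=> n.
  rewrite (@null_diff R _ _ mu _ _ _ (mlt 0) mneg); last exact: measurableC.
  rewrite (@null_diff R _ _ mu _ _ _ (mge 1) mbig); last first.
    by apply: measurableD; [exact: measurableC| exact: mlt].
  apply: (@le_trans _ _ (mu (kn R u n @^-1` [set k | ~~ (w u n k < w p n k)]))).
    apply: le_measure; rewrite ?inE.
    - apply: measurableD; last exact: mge.
      by apply: measurableD; [exact: measurableC| exact: mlt].
    - exact: kn_meas.
    move=> x /= [[hB hneg] hbig]; apply/negP => hc; apply: hB; split => //.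
    have h0 : 0 <= x by rewrite leNgt; apply/negP.
    have h1 : x < 1 by rewrite ltNge; apply/negP.
    by rewrite /= in_itv /= h0 h1.
  by rewrite law_mu lee_fin; exact: bound_p.
have lamB : forall n, (lebesgue_measure (Bn n) <= (r ^+ n)%:E)%E.
  move=> n.
  change (lebesgue_measure (Bn n)) with (nu (kn R u n @^-1` [set k | w u n k < w p n k])).
  by rewrite law_nu lee_fin; exact: bound_u.
exists (\bigcap_m \bigcup_j Bn (j + m)%N); split.
- by apply: bigcapT_measurable => m; apply: bigcupT_measurable => j; exact: mB.
- apply: (@small R r ((1 - r)^-1)) => //.
    by rewrite invr_ge0 subr_ge0 ltW.
  move=> m.
  have mU : measurable (\bigcup_j Bn (j + m)%N) by apply: bigcupT_measurable => j; exact: mB.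
  apply: (@le_trans _ _ (lebesgue_measure (\bigcup_j Bn (j + m)%N))).
    apply: le_measure; rewrite ?inE //.
      by apply: bigcapT_measurable => m'; apply: bigcupT_measurable => j; exact: mB.
    by move=> x; apply.
  apply: le_trans; first exact: (@measure_sigma_subadditive _ R (measurableTypeR R) lebesgue_measure _
    (fun j => Bn (j + m)%N) (fun j => mB (j + m)%N) mU (@subset_refl _ _)).
  apply: le_trans; last exact: (@geo_le R r m r0 r1).
  apply: lee_nneseries => //.
  by move=> j _; exact: lamB.
- rewrite setC_bigcap.
  have -> : \bigcup_i ~` (\bigcup_j Bn (j + i)%N) = \bigcup_i \bigcap_j ~` Bn (j + i)%N.
    by apply: eq_bigcupr => i _; rewrite setC_bigcup.
  apply/eqP; rewrite -measure_le0.
  have mF : forall m, measurable (\bigcap_j ~` Bn (j + m)%N).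
    by move=> m; apply: bigcapT_measurable => j; apply: measurableC.
  have := @measure_sigma_subadditive _ R _ mu _ (fun m => \bigcap_j ~` Bn (j + m)%N) mF (bigcupT_measurable _ mF) (@subset_refl _ _).
  move=> /le_trans; apply.
  rewrite eseries0 // => m _ _.
  apply: (@small R r 1) => // M.
  apply: (@le_trans _ _ (mu (~` Bn (M + m)%N))).
    apply: le_measure; rewrite ?inE //; first exact: measurableC.
    by move=> x; apply.
  apply: le_trans; first exact: muB.
  rewrite lee_fin mulr1 exprD.
  have := exprn_ile1 m r0 (ltW r1); have := exprn_ge0 M r0; nra.
Qed.
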